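(* In the setting of the context, let $(b_{\mathbf{k}})_{\mathbf{k}\in\mathbb{N}^r}$ be a family of elements of $R$ with only finitely many nonzero. Then $\sum_{\mathbf{k}}b_{\mathbf{k}}(\mathbf{x})_{\mathbf{k}}\sim0$ if and only if $b_{\mathbf{k}}(\mathbf{x})_{\mathbf{k}}\sim0$ for every $\mathbf{k}\in\mathbb{N}^r$.
   Context: $D$ is a Dedekind domain, $r\ge1$, and $I_1,\ldots,I_r,J$ are ideals of $D$ different from $0$ and $D$. For each $i$ a complete set of residues $\mathcal{D}_{I_i}\subseteq D$ modulo $I_i$ with $0\in\mathcal{D}_{I_i}$ is fixed. Let $K=I_1\cap\cdots\cap I_r\cap J$, $R=D/K$, and $\bar I=I/K$ for ideals $I\supseteq K$. Let $X_i\subseteq R$ be the image of $\mathcal{D}_{I_i}$ in $R$. Write $K=P_1^{e_1}\cdots P_n^{e_n}$; the nonzero primes of $R$ are $\bar P_1,\ldots,\bar P_n$. For a nonzero prime $\bar P$ of $R$ and $a\in R$, $w_{\bar P}(a)$ is the highest power of $\bar P$ containing $a$ ($w_{\bar P}(0)=0$). A $\bar P$-ordering of $X\subseteq R$ is a sequence $b_0,b_1,\ldots$ in $X$, $b_0$ arbitrary, with each $b_k$ chosen to make $w_{\bar P}((b_k-b_0)\cdots(b_k-b_{k-1}))$ as large as possible. For each $i,l$ fix a $\bar P_l$-ordering $(a_{l,i,j})_j$ of $X_i$ with $a_{l,i,0}=0$, and let $a_{i,j}\in R$ satisfy $a_{i,0}=0$, $a_{i,j}\equiv a_{l,i,j}\pmod{\bar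 P_l^{e_l}}$ for all $l$. Set $(\mathbf{x})_{\mathbf{k}}=\prod_{i=1}^r (x_i)_{k_i}$ with $(x_i)_0=1$, $(x_i)_k=\prod_{j=0}^{k-1}(x_i-a_{i,j})$. For $F,G\in R[x_1,\ldots,x_r]$, $F\sim G$ means $F(\mathbf{c})-G(\mathbf{c})\in\bar J$ for all $\mathbf{c}\in X_1\times\cdots\times X_r$. *)

(* Defs.v *)
From HB Require Import structures.
From mathcomp Require Import all_boot all_order all_algebra.
From mathcomp Require Import fraction.
Set Implicit Arguments. Unset Strict Implicit. Unset Printing Implicit Defensive.
Import Order.TTheory GRing.Theory Num.Theory.
Local Open Scope ring_scope.

Section Ideals.
Variable D : idomainType.

Definition subsetD (A B : D -> Prop) : Prop := forall x, A x -> B x.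
Definition eqsetD (A B : D -> Prop) : Prop := forall x, A x <-> B x.

Definition is_ideal (I : D -> Prop) : Prop :=
  [/\ I 0, (forall x y, I x -> I y -> I (x + y)) & (forall a x, I x -> I (a * x))].

Definition ideal_nonzero (I : D -> Prop) : Prop := exists2 x, I x & x != 0.
Definition ideal_proper (I : D -> Prop) : Prop := ~ I 1.

Definition prime_ideal (I : D -> Prop) : Prop :=
  [/\ is_ideal I, ideal_proper I & forall x y, I (x * y) -> I x \/ I y].

Definition maximal_ideal (I : D -> Prop) : Prop :=
  [/\ is_ideal I, ideal_proper I &
      forall J, is_ideal J -> subsetD I J -> ideal_proper J -> subsetD J I].

Definition idsum (I J : D -> Prop) : D -> Prop :=
  fun x => exists a b, [/\ I a, J b & x = a + b].
Definition idmul (I J : D -> Prop) : D -> Prop :=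
  fun x => exists s : seq (D * D),
    (forall p, p \in s -> I p.1 /\ J p.2) /\ x = \sum_(p <- s) p.1 * p.2.
Definition idfull : D -> Prop := fun _ => True.
Fixpoint idpow (I : D -> Prop) (m : nat) : D -> Prop :=
  if m is m'.+1 then idmul (idpow I m') I else idfull.

Definition noetherian : Prop :=
  forall C : nat -> D -> Prop, (forall k, is_ideal (C k)) ->
    (forall k, subsetD (C k) (C k.+1)) ->
    exists N, forall k, (N <= k)%N -> subsetD (C k) (C N).

Definition integrally_closed : Prop :=
  forall x : {fraction D},
    (exists2 p : {poly D}, p \is monic & root (map_poly (@tofrac D) p) x) ->
    exists d : D, x = tofrac d.

Definition dim_le1 : Prop :=
  forall P, prime_ideal P -> ideal_nonzero P -> maximal_ideal P.

Definition dedekind : Prop := [/\ noetherian, integrally_closed & dim_le1].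

Definition residue_system (I S : D -> Prop) : Prop :=
  (forall x, exists2 d, S d & I (x - d)) /\
  (forall d d', S d -> S d' -> I (d - d') -> d = d').

(* ---- The ring R = D/K, represented through representatives in D ---- *)
(* The image in R of an ideal A (containing K, or A + K in general) has preimage idsum A K. *)
(* w_{Pbar}(a) : the ideal of R (given by its preimage in D): the zero ideal if a = 0 in R,
   otherwise the smallest power Pbar^m containing a (intersection of the powers containing a). *)
Definition wP (K P : D -> Prop) (a : D) : D -> Prop :=
  fun x => (K a -> K x) /\
           (~ K a -> forall m, idsum (idpow P m) K a -> idsum (idpow P m) K x).

Definition is_Pordering (K P X : D -> Prop) (b : nat -> D) : Prop :=
  (forall k, X (b k)) /\
  forall k, (0 < k)%N -> forall c, X c ->
    subsetD (wP K P (\prod_(j < k) (c - b j))) (wP K P (\prod_(j < k) (b k - b j))).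

Definition imgR (K S : D -> Prop) : D -> Prop := fun x => exists2 d, S d & K (x - d).

Definition falling (a : nat -> D) (x : D) (k : nat) : D := \prod_(j < k) (x - a j).

Definition mfalling (r : nat) (a : 'I_r -> nat -> D) (x : 'I_r -> D) (k : {ffun 'I_r -> nat}) : D :=
  \prod_(i < r) falling (a i) (x i) (k i).

End Ideals.

(* Main.v *)
From HB Require Import structures.
From mathcomp Require Import all_boot all_order all_algebra fraction ring.
From Stdlib Require Import Classical ClassicalEpsilon.
Require Import Defs.
Set Implicit Arguments. Unset Strict Implicit. Unset Printing Implicit Defensive.
Import GRing.Theory.
Local Open Scope ring_scope.


Section Basics.
Variable D : idomainType.
Implicit Types A B T : D -> Prop.

Lemma ideal0 A : is_ideal A -> A 0. Proof. by case. Qed.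
Lemma idealD A x y : is_ideal A -> A x -> A y -> A (x + y).
Proof. by case=> _ H _; apply: H. Qed.
Lemma idealM A c x : is_ideal A -> A x -> A (c * x).
Proof. by case=> _ _ H; apply: H. Qed.
Lemma idealMr A c x : is_ideal A -> A x -> A (x * c).
Proof. by move=> hA hx; rewrite mulrC; apply: idealM. Qed.
Lemma idealN A x : is_ideal A -> A x -> A (- x).
Proof. by move=> hA hx; rewrite -mulN1r; apply: idealM. Qed.
Lemma idealB A x y : is_ideal A -> A x -> A y -> A (x - y).
Proof. by move=> hA hx hy; apply: idealD => //; apply: idealN. Qed.
Lemma idealBr A x y : is_ideal A -> A (x - y) -> A (y - x).
Proof. by move=> hA h; rewrite -opprB; apply: idealN. Qed.

Lemma ideal_sum A (I : eqType) (s : seq I) (f : I -> D) :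
  is_ideal A -> (forall i, i \in s -> A (f i)) -> A (\sum_(i <- s) f i).
Proof.
move=> hA; elim: s => [|x s IH] H; first by rewrite big_nil; apply: ideal0.
rewrite big_cons; apply: idealD => //; first by apply: H; rewrite mem_head.
by apply: IH => i hi; apply: H; rewrite inE hi orbT.
Qed.

Lemma ideal_sum_fin A (I : finType) (f : I -> D) :
  is_ideal A -> (forall i, A (f i)) -> A (\sum_i f i).
Proof. by move=> hA H; apply: ideal_sum. Qed.

Lemma ideal_prod A (I : finType) (f : I -> D) j0 :
  is_ideal A -> A (f j0) -> A (\prod_i f i).
Proof. by move=> hA h; rewrite (bigD1 j0) //=; apply: idealMr. Qed.

Lemma idmul_ideal A B : is_ideal A -> is_ideal (idmul A B).
Proof.
move=> hA; split.
- by exists [::]; split => //; rewrite big_nil.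
- move=> x y [s1 [h1 ->]] [s2 [h2 ->]]; exists (s1 ++ s2); split; last by rewrite big_cat.
  by move=> p; rewrite mem_cat => /orP [] ?; [apply: h1|apply: h2].
- move=> c x [s [h ->]]; exists [seq (c * p.1, p.2) | p <- s]; split.
  + move=> p /mapP [q hq ->] /=; have [h1 h2] := h q hq; split => //.
    by apply: idealM.
  + by rewrite big_map mulr_sumr; apply: eq_bigr => p _ /=; rewrite mulrA.
Qed.

Lemma idmul_mem A B a b : A a -> B b -> idmul A B (a * b).
Proof. by move=> ha hb; exists [:: (a, b)]; split; [move=> p; rewrite inE => /eqP -> | rewrite big_seq1]. Qed.

Lemma idmul_sub A B T : is_ideal T -> (forall a b, A a -> B b -> T (a * b)) ->
  subsetD (idmul A B) T.
Proof.
move=> hT H x [s [hs ->]]; apply: ideal_sum => // p hp.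
by have [h1 h2] := hs p hp; apply: H.
Qed.

Lemma idmul_subl A B : is_ideal A -> subsetD (idmul A B) A.
Proof. by move=> hA; apply: idmul_sub => // a b ha _; apply: idealMr. Qed.
Lemma idmul_subr A B : is_ideal B -> subsetD (idmul A B) B.
Proof. by move=> hB; apply: idmul_sub => // a b _ hb; apply: idealM. Qed.

Lemma idfull_ideal : is_ideal (@idfull D). Proof. by split. Qed.

Lemma idpow_ideal A m : is_ideal A -> is_ideal (idpow A m).
Proof. move=> hA; elim: m => [|m IH] /=; [exact: idfull_ideal | exact: idmul_ideal]. Qed.

Lemma idpow_S_sub A m : is_ideal A -> subsetD (idpow A m.+1) (idpow A m).
Proof. by move=> hA; apply: idmul_subl; apply: idpow_ideal. Qed.

Lemma idpow_mono A m m' : is_ideal A -> (m <= m')%N -> subsetD (idpow A m') (idpow A m).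
Proof.
move=> hA /subnK <-; elim: (m' - m)%N => [|k IH] x //= hx.
by apply: IH; apply: (idpow_S_sub hA).
Qed.

Lemma idpow_exp A p m : A p -> idpow A m (p ^+ m).
Proof. move=> hp; elim: m => [|m IH] //=; by rewrite exprSr; apply: idmul_mem. Qed.

Lemma idpow_sub1 A m : is_ideal A -> (1 <= m)%N -> subsetD (idpow A m) A.
Proof.
move=> hA hm x hx; have := idpow_mono hA hm hx => /=.
by apply: idmul_subr.
Qed.

Lemma idsum_ideal A B : is_ideal A -> is_ideal B -> is_ideal (idsum A B).
Proof.
move=> hA hB; split.
- by exists 0, 0; split; rewrite ?addr0 //; apply: ideal0.
- move=> x y [a [b [ha hb ->]]] [a' [b' [ha' hb' ->]]].
  exists (a + a'), (b + b'); split; [exact: idealD|exact: idealD|].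
  by rewrite addrACA.
- move=> c x [a [b [ha hb ->]]]; exists (c * a), (c * b); split; [exact: idealM|exact: idealM|].
  by rewrite mulrDr.
Qed.

Lemma idsum_l A B x : is_ideal B -> A x -> idsum A B x.
Proof. by move=> hB hx; exists x, 0; split; rewrite ?addr0 //; apply: ideal0. Qed.
Lemma idsum_r A B x : is_ideal A -> B x -> idsum A B x.
Proof. by move=> hA hx; exists 0, x; split; rewrite ?add0r //; apply: ideal0. Qed.

Lemma idsum_sub A B T : is_ideal T -> subsetD A T -> subsetD B T -> subsetD (idsum A B) T.
Proof. by move=> hT hA hB x [a [b [ha hb ->]]]; apply: idealD => //; [exact: (hA _ ha)|exact: (hB _ hb)]. Qed.

Lemma noeth_max (hN : noetherian D) (F : (D -> Prop) -> Prop) :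
  (forall Q, F Q -> is_ideal Q) -> (exists Q, F Q) ->
  exists Q, F Q /\ forall Q', F Q' -> subsetD Q Q' -> subsetD Q' Q.
Proof.
move=> hF [Q0 hQ0]; apply: NNPP => Hn.
have H : forall Q, F Q -> exists Q', F Q' /\ subsetD Q Q' /\ ~ subsetD Q' Q.
  move=> Q hQ; apply: NNPP => H1; apply: Hn; exists Q; split => // Q' h1 h2.
  apply: NNPP => h3; apply: H1; by exists Q'.
pose nxt Q := epsilon (inhabits Q0) (fun Q' => F Q' /\ subsetD Q Q' /\ ~ subsetD Q' Q).
pose C k := iter k nxt Q0.
have hC : forall k, F (C k).
  elim=> [|k IH] //=; have := epsilon_spec (inhabits Q0) (fun Q' => F Q' /\ subsetD (C k) Q' /\ ~ subsetD Q' (C k)) (H _ IH).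
  by case.
have hC2 : forall k, subsetD (C k) (C k.+1) /\ ~ subsetD (C k.+1) (C k).
  move=> k; have := epsilon_spec (inhabits Q0) (fun Q' => F Q' /\ subsetD (C k) Q' /\ ~ subsetD Q' (C k)) (H _ (hC k)).
  by case.
have [N HN] := hN C (fun k => hF _ (hC k)) (fun k => (hC2 k).1).
by apply: (hC2 N).2; apply: HN.
Qed.

End Basics.


Section Local.
Variable D : idomainType.
Implicit Types A B T : D -> Prop.

Lemma prime_ideal_ideal A : prime_ideal A -> is_ideal A. Proof. by case. Qed.

Lemma prime_notM A s t : prime_ideal A -> ~ A s -> ~ A t -> ~ A (s * t).
Proof. by case=> _ _ H hs ht /H []. Qed.

Lemma prime_notprod A (I : finType) (f : I -> D) : prime_ideal A ->
  (forall i, ~ A (f i)) -> ~ A (\prod_i f i).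
Proof.
move=> hA H; rewrite -big_enum; elim: (enum I) => [|x s IH].
  by rewrite big_nil; case: hA.
by rewrite big_cons; apply: prime_notM.
Qed.

Lemma max_comax A s : maximal_ideal A -> ~ A s -> exists a p0, A p0 /\ 1 = s * a + p0.
Proof.
case=> hA hpr hmax hs; apply: NNPP => H.
pose J' := fun x => exists a p, A p /\ x = s * a + p.
have hJ : is_ideal J'.
  split.
  - by exists 0, 0; split; [apply: ideal0 | rewrite mulr0 addr0].
  - move=> x y [a [p [hp ->]]] [a' [p' [hp' ->]]]; exists (a + a'), (p + p'); split.
      exact: idealD.
    by rewrite mulrDr addrACA.
  - move=> c x [a [p [hp ->]]]; exists (c * a), (c * p); split; first exact: idealM.
    by rewrite mulrDr mulrCA.
have sub : subsetD A J' by move=> x hx; exists 0, x; split; rewrite ?mulr0 ?add0r.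
have hpJ : ideal_proper J' by move=> [a [p [hp e]]]; apply: H; exists a, p.
apply: hs; apply: (hmax J' hJ sub hpJ); exists 1, 0; split; [exact: ideal0 | by rewrite mulr1 addr0].
Qed.

Lemma one_sub_pow (p : D) E : exists c, 1 - p ^+ E = (1 - p) * c.
Proof.
elim: E => [|E [c hc]]; first by exists 0; rewrite expr0 subrr mulr0.
exists (c + p ^+ E); rewrite mulrDr -hc exprS; ring.
Qed.

Lemma max_unit A s E : maximal_ideal A -> ~ A s ->
  exists a r, idpow A E r /\ s * a = 1 - r.
Proof.
move=> hM hs; have [a [p0 [hp0 e1]]] := max_comax hM hs.
have [c hc] := one_sub_pow p0 E.
exists (a * c), (p0 ^+ E); split; first exact: idpow_exp.
by rewrite hc mulrA; congr (_ * _); rewrite e1 addrK.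
Qed.

Definition span (gs : seq D) : D -> Prop :=
  fun x => exists cs : nat -> D, x = \sum_(i < size gs) cs i * gs`_i.

Lemma span_ideal gs : is_ideal (span gs).
Proof.
split.
- by exists (fun _ => 0); rewrite big1 // => i _; rewrite mul0r.
- move=> x y [c1 ->] [c2 ->]; exists (fun i => c1 i + c2 i).
  by rewrite -big_split; apply: eq_bigr => i _; rewrite mulrDl.
- move=> c x [c1 ->]; exists (fun i => c * c1 i).
  by rewrite mulr_sumr; apply: eq_bigr => i _; rewrite mulrA.
Qed.

Lemma span_sub gs T : is_ideal T -> (forall i, (i < size gs)%N -> T gs`_i) -> subsetD (span gs) T.
Proof.
move=> hT H x [cs ->]; apply: ideal_sum_fin => // i; apply: idealM => //; exact: H.
Qed.

Lemma span_cons1 g gs : span (g :: gs) g.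
Proof.
exists (fun i => if i is 0%N then 1 else 0); rewrite big_ord_recl /= mul1r big1 ?addr0 //.
by move=> i _; rewrite mul0r.
Qed.

Lemma span_cons2 g gs : subsetD (span gs) (span (g :: gs)).
Proof.
move=> x [cs ->]; exists (fun i => if i is i'.+1 then cs i' else 0).
by rewrite big_ord_recl /= mul0r add0r.
Qed.

Lemma span_fg (hN : noetherian D) A : is_ideal A ->
  exists gs : seq D, (forall i, (i < size gs)%N -> A gs`_i) /\ forall x, A x -> span gs x.
Proof.
move=> hA.
pose F Q := exists gs : seq D, (forall i, (i < size gs)%N -> A gs`_i) /\ Q = span gs.
have [Q [[gs [h1 ->]] hmax]] : exists Q, F Q /\ forall Q', F Q' -> subsetD Q Q' -> subsetD Q' Q.
  apply: noeth_max => //; last by exists (span [::]), [::]; split.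
  by move=> Q [gs [_ ->]]; apply: span_ideal.
exists gs; split => // x hx.
apply: (hmax (span (x :: gs))); last exact: span_cons1.
- exists (x :: gs); split => // -[|i] //= hi; exact: h1.
- exact: span_cons2.
Qed.

Lemma span_nz gs x : span gs x -> x != 0 -> exists i : 'I_(size gs), gs`_i != 0.
Proof.
move=> [cs ->] hx; apply: NNPP => H; move/eqP: hx; apply; apply: big1 => i _.
have : ~ (gs`_i != 0) by move=> h; apply: H; exists i.
by move/negP; rewrite negbK => /eqP ->; rewrite mulr0.
Qed.

End Local.


Section Z.
Variable D : idomainType.
Implicit Types A B T : D -> Prop.

Definition Lx (P : D -> Prop) (x : D) : D -> Prop :=
  fun d => exists s c, ~ P s /\ s * d = x * c.

Lemma Lx_ideal P x : prime_ideal P -> is_ideal (Lx P x).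
Proof.
move=> hP; split.
- by exists 1, 0; split; [case: hP | rewrite !mulr0].
- move=> a b [s [c [hs e1]]] [s' [c' [hs' e2]]]; exists (s * s'), (c * s' + s * c'); split.
    exact: prime_notM.
  transitivity (s' * (s * a) + s * (s' * b)); first ring.
  by rewrite e1 e2; ring.
- move=> a b [s [c [hs e1]]]; exists s, (a * c); split => //.
  by rewrite mulrCA e1 mulrCA.
Qed.

Lemma Lx_sat P x s d : prime_ideal P -> ~ P s -> Lx P x (s * d) -> Lx P x d.
Proof.
move=> hP hs [t [c [ht e1]]]; exists (t * s), c; split; first exact: prime_notM.
by rewrite -mulrA.
Qed.

Lemma exists_z (hN : noetherian D) (hdim : dim_le1 D) P x :
  prime_ideal P -> P x -> x != 0 ->
  exists z, ~ Lx P x z /\ forall p, P p -> Lx P x (p * z).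
Proof.
move=> hP hxP hx0; have hL := Lx_ideal x hP.
pose F Q := exists d, ~ Lx P x d /\ Q = (fun a => Lx P x (a * d)).
have Fid : forall d, is_ideal (fun a => Lx P x (a * d)).
  move=> d; split.
  - by rewrite mul0r; apply: ideal0.
  - by move=> a b ha hb; rewrite mulrDl; apply: idealD.
  - by move=> c a ha; rewrite -mulrA; apply: idealM.
have [Q [[d0 [hd0 ->]] hmax]] : exists Q, F Q /\ forall Q', F Q' -> subsetD Q Q' -> subsetD Q' Q.
  apply: noeth_max => //; first by move=> Q [d [_ ->]].
  exists (fun a => Lx P x (a * 1)), 1; split => //.
  move=> [s [c [hs e1]]]; apply: hs; rewrite mulr1 in e1; rewrite e1.
  by apply: (@idealMr _ P c x) => //; case: hP.
exists d0; split => // p hp.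
have hQ : prime_ideal (fun a => Lx P x (a * d0)).
  split => //; first by rewrite /ideal_proper mul1r.
  move=> a b hab; case: (classic (Lx P x (a * d0))) => ha; [by left|right].
  have : subsetD (fun c => Lx P x (c * (a * d0))) (fun c => Lx P x (c * d0)).
    apply: hmax; first by exists (a * d0); split.
    by move=> c hc; rewrite mulrCA; apply: idealM.
  by apply; rewrite mulrA [b * a]mulrC.
have hQnz : ideal_nonzero (fun a => Lx P x (a * d0)).
  by exists x => //; exists 1, d0; split; [case: hP | rewrite mul1r].
have [_ _ hM] := hdim _ hQ hQnz.
apply: (hM P (prime_ideal_ideal hP)) => //; last by case: hP.
move=> a ha; apply: NNPP => hna; apply: hd0; exact: Lx_sat hna ha.
Qed.

End Z.


Section H.
Variable D : idomainType.

Lemma localH (hD : dedekind D) (P : D -> Prop) : prime_ideal P -> ideal_nonzero P ->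
  forall E, exists pi, P pi /\ forall q, P q -> exists d r, idpow P E r /\ q = pi * d + r.
Proof.
move=> hP hnz E; case: hD => hN hIC hdim.
have hM : maximal_ideal P := hdim P hP hnz.
case: hnz => x hxP hx0.
have [z [hz hzP]] := exists_z hN hdim hP hxP hx0.
have z0 : z != 0.
  apply/negP => /eqP z0; apply: hz; exists 1, 0; rewrite z0 !mulr0; split => //; by case: hP.
case: (classic (exists p s w, [/\ P p, ~ P s, ~ P w & s * (p * z) = x * w])) =>
  [[p [s [w [hp hs hw e1]]]] | HA].
- exists p; split => // q hq.
  have [sq [cq [hsq e2]]] := hzP q hq.
  have key : sq * w * q = s * cq * p.
    apply: (mulfI z0).
    transitivity (w * (sq * (q * z))); first ring.
    transitivity (cq * (s * (p * z))); last ring.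
    by rewrite e2 e1; ring.
  have [a [r [hr e3]]] := max_unit E hM (prime_notM hP hsq hw).
  exists (s * cq * a), (q * r); split.
    by apply: idealM => //; apply: idpow_ideal; case: hP.
  transitivity ((sq * w * q) * a + q * r).
    by rewrite -[in LHS](mulr1 q) -[1](subrK r) -e3; ring.
  by rewrite key; ring.
- exfalso.
  have HA' : forall p, P p -> exists s w, [/\ ~ P s, P w & s * (p * z) = x * w].
    move=> p hp; have [s [c [hs e]]] := hzP p hp; exists s, c; split => //.
    by apply: NNPP => hc; apply: HA; exists p, s, c; split.
  have [gs [hgs hspan]] := span_fg hN (prime_ideal_ideal hP).
  pose t := size gs.
  have H1 : forall i : 'I_t, exists f : D * (nat -> D),
      ~ P f.1 /\ f.1 * (gs`_i * z) = x * \sum_(j < t) f.2 j * gs`_j.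
    move=> i; have [s [w [hs hw e]]] := HA' _ (hgs i (ltn_ord i)).
    have [cs ecs] := hspan w hw.
    by exists (s, cs); split => //=; rewrite e ecs.
  have [f hf] := fin_all_exists H1.
  pose s_ i := (f i).1.
  pose S := \prod_i s_ i.
  have hS : ~ P S by apply: prime_notprod => // i; case: (hf i).
  pose M : 'M[D]_t := \matrix_(j, i) ((\prod_(k | k != i) s_ k) * (f i).2 j).
  have eqM : forall i : 'I_t, S * (gs`_i * z) = x * \sum_(j < t) M j i * gs`_j.
    move=> i; rewrite /S (bigD1 i) //= -mulrA mulrCA {1}/s_ (hf i).2 mulrCA; congr (_ * _).
    rewrite mulr_sumr; apply: eq_bigr => j _; rewrite mxE mulrA //.
  pose tau := @tofrac D.
  pose y := tau (S * z) / tau x.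
  have tx0 : tau x != 0 by rewrite tofrac_eq0.
  pose v : 'rV[{fraction D}]_t := \row_j tau gs`_j.
  have hv : v *m map_mx tau M = y *: v.
    apply/rowP => i; rewrite !mxE.
    have -> : \sum_j v 0 j * map_mx tau M j i = tau (\sum_(j < t) M j i * gs`_j).
      rewrite /tau rmorph_sum; apply: eq_bigr => j _; rewrite !mxE rmorphM mulrC //.
    rewrite /y -mulrA mulrC; apply: (mulfI tx0).
    by rewrite !mulrA mulfV // mul1r /tau -!rmorphM -eqM; congr tofrac; ring.
  have v0 : v != 0.
    have [i hi] := span_nz (hspan x hxP) hx0.
    by apply/eqP => /rowP /(_ i); rewrite !mxE => /eqP; rewrite tofrac_eq0 (negbTE hi).
  have hroot : root (char_poly (map_mx tau M)) y.
    by rewrite -eigenvalue_root_char; apply/eigenvalueP; exists v.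
  have [d hd] : exists d, y = tau d.
    apply: hIC; exists (char_poly M); first exact: char_poly_monic.
    by rewrite map_char_poly.
  apply: hz; exists S, d; split => //.
  apply/eqP; rewrite -tofrac_eq; apply/eqP.
  have -> : tofrac (x * d) = tau x * y by rewrite hd /tau rmorphM.
  by rewrite /y [tau x * _]mulrC divfK.
Qed.

End H.


Section F.
Variable D : idomainType.

Lemma factF (hD : dedekind D) (P : D -> Prop) e u v : prime_ideal P -> ideal_nonzero P ->
  (forall m, (m <= e)%N -> idpow P m v -> idpow P m u) ->
  exists d q, idpow P e q /\ u = v * d + q.
Proof.
move=> hP hnz H.
have hPi := prime_ideal_ideal hP.
have hPe := idpow_ideal e hPi.
have [pi [hpi hpiP]] := localH hD hP hnz e.
have hM : maximal_ideal P by case: hD => _ _ hdim; apply: hdim.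
pose T t := fun a => exists d q, idpow P e q /\ a = pi ^+ t * d + q.
have Tid : forall t, is_ideal (T t).
  move=> t; split.
  - by exists 0, 0; split; [apply: ideal0 | rewrite mulr0 addr0].
  - move=> a b [d [q [hq ->]]] [d' [q' [hq' ->]]]; exists (d + d'), (q + q'); split.
      exact: idealD.
    by rewrite mulrDr addrACA.
  - move=> c a [d [q [hq ->]]]; exists (c * d), (c * q); split; first exact: idealM.
    by rewrite mulrDr mulrCA.
have powsub : forall t a, idpow P t a -> T t a.
  elim=> [|t IH] a /=.
    by move=> _; exists a, 0; split; [apply: ideal0 | rewrite expr0 mul1r addr0].
  move=> ha; apply: (@idmul_sub D (idpow P t) P (T t.+1) (Tid t.+1) _ a ha) => a1 b1 /IH [d [q [hq ->]]] /hpiP [d' [q' [hq' ->]]].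
  exists (d * d'), (pi ^+ t * d * q' + q * (pi * d' + q')); split.
    by apply: idealD => //; [apply: (idealM _ hPe hq') | apply: (idealMr _ hPe hq)].
  rewrite exprSr; ring.
suff: forall k t, (t + k = e)%N -> idpow P t v -> exists d q, idpow P e q /\ u = v * d + q.
  by move=> /(_ e 0%N); apply.
elim=> [|k IH] t htk hv.
  rewrite addn0 in htk; subst t; exists 0, u; split; first by apply: H.
  by rewrite mulr0 add0r.
case: (classic (idpow P t.+1 v)) => hv1.
  by apply: (IH t.+1) => //; rewrite addSnnS.
have hte : (t <= e)%N by rewrite -htk leq_addr.
have ht1e : (t.+1 <= e)%N by rewrite -htk addnS ltnS leq_addr.
have hu := H t hte hv.
have [w [q [hq ev]]] := powsub t v hv.
have hw : ~ P w.
  move=> hw; apply: hv1; rewrite ev; apply: idealD; first exact: idpow_ideal.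
    by apply: idmul_mem => //; apply: idpow_exp.
  exact: (idpow_mono hPi ht1e).
have [a [r [hr e3]]] := max_unit e hM hw.
have [d' [q' [hq' eu]]] := powsub t u hu.
exists (a * d'), (q' - q * a * d' + pi ^+ t * r * d'); split.
  apply: (idealD hPe); last by apply: (idealMr _ hPe); apply: (idealM _ hPe).
  by apply: (idealB hPe) => //; apply: (idealMr _ hPe); apply: (idealMr _ hPe).
rewrite eu ev.
transitivity (pi ^+ t * (w * a) * d' + q * a * d' + (q' - q * a * d' + pi ^+ t * r * d')); last ring.
by rewrite e3; ring.
Qed.

Lemma factW (hD : dedekind D) (P K : D -> Prop) e u v : prime_ideal P -> ideal_nonzero P ->
  is_ideal K -> subsetD K (idpow P e) -> wP K P v u ->
  exists d q, idpow P e q /\ u = v * d + q.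
Proof.
move=> hP hnz hK hKe [w1 w2].
have hPi := prime_ideal_ideal hP.
case: (classic (K v)) => hv.
  by exists 0, u; split; [apply: hKe; apply: w1 | rewrite mulr0 add0r].
apply: factF => // m hm hvm.
have [a [k [ha hk ->]]] := w2 hv m (idsum_l hK hvm).
apply: idealD; [exact: idpow_ideal | exact: ha | ].
exact: (idpow_mono hPi hm (hKe _ hk)).
Qed.

End F.


Section G.
Variable D : idomainType.
Implicit Types A B C : D -> Prop.

Definition comax A B := exists a b, [/\ A a, B b & a + b = 1].

Lemma comax_sym A B : comax A B -> comax B A.
Proof. by move=> [a [b [ha hb e]]]; exists b, a; split => //; rewrite addrC. Qed.

Lemma comax_mul A B C : is_ideal A -> comax A B -> comax A C -> comax A (idmul B C).
Proof.
move=> hA [a [b [ha hb e1]]] [a' [c [ha' hc e2]]].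
exists (a * (a' + c) + b * a'), (b * c); split.
- by apply: (idealD hA); [apply: (idealMr _ hA) | apply: (idealM _ hA)].
- exact: idmul_mem.
- by rewrite -addrA -mulrDr -mulrDl e1 e2 mulr1.
Qed.

Lemma comax_pow A B m : is_ideal A -> comax A B -> comax A (idpow B m).
Proof.
move=> hA h; elim: m => [|m IH] /=.
  by exists 0, 1; split => //; [apply: ideal0 | rewrite add0r].
exact: comax_mul.
Qed.

Lemma big_ideal (I : eqType) (s : seq I) (F : I -> D -> Prop) :
  (forall l, is_ideal (F l)) -> is_ideal (\big[@idmul D/@idfull D]_(l <- s) F l).
Proof.
move=> H; elim: s => [|x s IH]; first by rewrite big_nil; exact: idfull_ideal.
rewrite big_cons; exact: idmul_ideal.
Qed.

Lemma big_sub (I : eqType) (s : seq I) (F : I -> D -> Prop) l :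
  (forall l, is_ideal (F l)) -> l \in s -> subsetD (\big[@idmul D/@idfull D]_(l <- s) F l) (F l).
Proof.
move=> H; elim: s => [|x s IH] //; rewrite inE big_cons => /orP [/eqP -> | hl] y hy.
  exact: (idmul_subl (H x) hy).
apply: IH => //; exact: (idmul_subr (big_ideal s H) hy).
Qed.

Lemma comax_big A (I : eqType) (s : seq I) (F : I -> D -> Prop) : is_ideal A ->
  (forall l, l \in s -> comax A (F l)) -> comax A (\big[@idmul D/@idfull D]_(l <- s) F l).
Proof.
move=> hA; elim: s => [|x s IH] H.
  by rewrite big_nil; exists 0, 1; split => //; [apply: ideal0 | rewrite add0r].
rewrite big_cons; apply: comax_mul => //; first by apply: H; rewrite mem_head.
by apply: IH => l hl; apply: H; rewrite inE hl orbT.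
Qed.

Lemma glue J A B x : is_ideal J -> is_ideal A -> comax A B ->
  idsum J A x -> idsum J B x -> idsum J (idmul A B) x.
Proof.
move=> hJ hA [al [be [hal hbe e]]] [j1 [a1 [hj1 ha1 e1]]] [j2 [b2 [hj2 hb2 e2]]].
exists (j1 * be + j2 * al), (a1 * be + al * b2); split.
- by apply: (idealD hJ); apply: (idealMr _ hJ).
- by apply: (idealD (idmul_ideal _ hA)); apply: idmul_mem.
- rewrite -[LHS]mulr1 -e mulrDr.
  transitivity (x * be + x * al); first by rewrite addrC.
  rewrite {1}e1 {1}e2; ring.
Qed.

Lemma glue_big J (I : eqType) (s : seq I) (F : I -> D -> Prop) x : is_ideal J ->
  (forall l, is_ideal (F l)) -> uniq s ->
  (forall l l', l != l' -> comax (F l) (F l')) ->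
  (forall l, l \in s -> idsum J (F l) x) -> idsum J (\big[@idmul D/@idfull D]_(l <- s) F l) x.
Proof.
move=> hJ hF; elim: s => [|y s IH] hu hc H.
  by rewrite big_nil; apply: idsum_r => //.
rewrite big_cons; case/andP: hu => hy hu.
apply: glue => //.
- apply: comax_big => // l hl; apply: hc; apply/eqP => eyl; move: hy; by rewrite eyl hl.
- by apply: H; rewrite mem_head.
- by apply: IH => // l hl; apply: H; rewrite inE hl orbT.
Qed.

Lemma max_comax2 P P' : maximal_ideal P -> is_ideal P' -> (exists2 b, P' b & ~ P b) -> comax P P'.
Proof.
move=> hM hP' [b hb hnb]; have [a [p0 [hp0 e]]] := max_comax hM hnb.
exists p0, (b * a); split => //; first exact: (idealMr _ hP').
by rewrite e addrC.
Qed.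

End G.

Lemma test (D : idomainType) n (F : 'I_n -> D -> Prop) (x : D) :
  (\big[@idmul D/@idfull D]_(l < n) F l) x -> (\big[@idmul D/@idfull D]_(l <- index_enum 'I_n) F l) x.
Proof. exact. Qed.


Section M.
Variable D : idomainType.
Implicit Types A B C : D -> Prop.

Lemma ideal_big_pred A (I : Type) (s : seq I) (Pr : pred I) (f : I -> D) :
  is_ideal A -> (forall i, Pr i -> A (f i)) -> A (\sum_(i <- s | Pr i) f i).
Proof.
move=> hA H; apply: big_ind => //; first exact: ideal0.
by move=> x y; apply: idealD.
Qed.

Lemma prod_congr A (I : Type) (s : seq I) (f g : I -> D) : is_ideal A ->
  (forall i, A (f i - g i)) -> A (\prod_(i <- s) f i - \prod_(i <- s) g i).
Proof.
move=> hA H; elim: s => [|x s IH]; first by rewrite !big_nil subrr; apply: ideal0.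
rewrite !big_cons.
have -> : f x * \prod_(j <- s) f j - g x * \prod_(j <- s) g j =
  f x * (\prod_(j <- s) f j - \prod_(j <- s) g j) + (f x - g x) * \prod_(j <- s) g j by ring.
by apply: (idealD hA); [apply: (idealM _ hA) | apply: (idealMr _ hA)].
Qed.

Lemma prod_lin A (I : Type) (s : seq I) (u v : I -> D) : is_ideal A ->
  (forall i, exists d q, A q /\ u i = v i * d + q) ->
  exists d q, A q /\ \prod_(i <- s) u i = \prod_(i <- s) v i * d + q.
Proof.
move=> hA H; elim: s => [|x s [d [q [hq IH]]]].
  by exists 1, 0; split; [apply: ideal0 | rewrite !big_nil mulr1 addr0].
have [d1 [q1 [hq1 e1]]] := H x.
rewrite !big_cons IH e1.
exists (d1 * d), (q1 * (\prod_(j <- s) v j * d + q) + v x * d1 * q); split; last by ring.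
by apply: (idealD hA); [apply: (idealMr _ hA) | apply: (idealM _ hA)].
Qed.

Lemma sum_lt r (f g : 'I_r -> nat) i0 : (forall i, f i <= g i)%N -> (f i0 < g i0)%N ->
  (\sum_i f i < \sum_i g i)%N.
Proof.
move=> H h0; rewrite (bigD1 i0) //= [X in (_ < X)%N](bigD1 i0) //=.
by rewrite -addSn leq_add // leq_sum.
Qed.

End M.

Unset Implicit Arguments.

Theorem mainTheorem4
  (D : idomainType) (hD : dedekind D)
  (r : nat) (hr : (1 <= r)%N)
  (I : 'I_r -> D -> Prop) (J : D -> Prop)
  (hI : forall i, [/\ is_ideal (I i), ideal_nonzero (I i) & ideal_proper (I i)])
  (hJ : [/\ is_ideal J, ideal_nonzero J & ideal_proper J])
  (DI : 'I_r -> D -> Prop)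
  (hDI : forall i, residue_system (I i) (DI i) /\ DI i 0)
  (K : D -> Prop) (hK : forall x, K x <-> ((forall i, I i x) /\ J x))
  (n : nat) (P : 'I_n -> D -> Prop) (e : 'I_n -> nat)
  (hP : forall l, prime_ideal (P l) /\ ideal_nonzero (P l))
  (hPinj : forall l l', eqsetD (P l) (P l') -> l = l')
  (he : forall l, (1 <= e l)%N)
  (hKfact : eqsetD K (\big[@idmul D/@idfull D]_(l < n) idpow (P l) (e l)))
  (al : 'I_n -> 'I_r -> nat -> D)
  (hal : forall l i, is_Pordering K (P l) (imgR K (DI i)) (al l i) /\ K (al l i 0%N))
  (a : 'I_r -> nat -> D)
  (ha0 : forall i, K (a i 0%N))
  (ha : forall i j l, idsum (idpow (P l) (e l)) K (a i j - al l i j))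
  (b : {ffun 'I_r -> nat} -> D) (N : nat)
  (hb : forall k : {ffun 'I_r -> nat}, (exists i, (N <= k i)%N) -> K (b k)) :
  (forall c : 'I_r -> D, (forall i, imgR K (DI i) (c i)) ->
     J (\sum_(k : {ffun 'I_r -> 'I_N}) b [ffun i => (k i : nat)] * mfalling a c [ffun i => (k i : nat)] - 0))
  <->
  (forall k : {ffun 'I_r -> nat}, forall c : 'I_r -> D, (forall i, imgR K (DI i) (c i)) ->
     J (b k * mfalling a c k - 0)).
Proof.
case: hJ => hJi _ _.
have hKi : is_ideal K.
  split.
  - by apply/hK; split; [move=> i; case: (hI i) => h _ _; apply: ideal0 | apply: ideal0].
  - move=> x y /hK [hx1 hx2] /hK [hy1 hy2]; apply/hK; split; last exact: idealD.
    by move=> i; case: (hI i) => h _ _; apply: idealD.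
  - move=> c x /hK [hx1 hx2]; apply/hK; split; last exact: idealM.
    by move=> i; case: (hI i) => h _ _; apply: idealM.
have hKJ : forall x, K x -> J x by move=> x /hK [].
pose Q l := idpow (P l) (e l).
have hPi : forall l, is_ideal (P l) by move=> l; case: (hP l) => /prime_ideal_ideal.
have hQi : forall l, is_ideal (Q l) by move=> l; apply: idpow_ideal.
have hKQ : forall l x, K x -> Q l x.
  move=> l x /hKfact hx; apply: (big_sub (s := index_enum 'I_n) hQi (mem_index_enum l)).
  exact: hx.
have hMax : forall l, maximal_ideal (P l).
  by move=> l; case: hD => _ _ hdim; case: (hP l) => h1 h2; apply: hdim.
have glob : forall x, (forall l, idsum J (Q l) x) -> J x.
  move=> x H.
  have : idsum J (\big[@idmul D/@idfull D]_(l <- index_enum 'I_n) Q l) x.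
    apply: glue_big => //; first exact: index_enum_uniq.
    move=> l l' hll'.
    have hc : comax (P l) (P l').
      apply: max_comax2 => //; apply: NNPP => Hn.
      have sub : subsetD (P l') (P l).
        by move=> y hy; apply: NNPP => hny; apply: Hn; exists y.
      have [_ _ hM'] := hMax l'.
      have sub2 := hM' (P l) (hPi l) sub ltac:(by case: (hMax l)).
      move/eqP: hll'; apply; apply: hPinj => y; split; [exact: sub2 | exact: sub].
    apply: comax_pow => //; apply: comax_sym; apply: comax_pow => //; exact: comax_sym.
  move=> [j [k [hj hk ->]]]; apply: idealD => //; apply: hKJ; apply/hKfact; exact: hk.
split; last first.
  move=> H c hc; rewrite subr0; apply: ideal_sum_fin => // k.
  by have := H [ffun i => (k i : nat)] c hc; rewrite subr0.
move=> H.
have step : forall m : {ffun 'I_r -> nat},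
    (forall k : {ffun 'I_r -> nat}, (\sum_i k i < \sum_i m i)%N ->
       forall c, (forall i, imgR K (DI i) (c i)) -> J (b k * mfalling a c k)) ->
    forall c, (forall i, imgR K (DI i) (c i)) -> J (b m * mfalling a c m).
  move=> m IH c hc.
  case: (classic (exists i, (N <= m i)%N)) => hN.
    by apply: (idealMr _ hJi); apply: hKJ; exact: hb.
  have hmN : forall i, (m i < N)%N.
    by move=> i; rewrite ltnNge; apply/negP => h; apply: hN; exists i.
  apply: glob => l.
  pose p i := al l i (m i).
  have hp : forall i, imgR K (DI i) (p i) by move=> i; case: (hal l i) => [[h _] _]; apply: h.
  pose k0 : {ffun 'I_r -> 'I_N} := [ffun i => Ordinal (hmN i)].
  have hk0 : [ffun i => (k0 i : nat)] = m by apply/ffunP => i; rewrite !ffunE.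
  have HZ := idsum_ideal hJi (hQi l).
  have hQZ : forall x, Q l x -> idsum J (Q l) x by move=> x; apply: idsum_r.
  have hJZ : forall x, J x -> idsum J (Q l) x by move=> x; apply: idsum_l.
  have hterm : idsum J (Q l) (b m * mfalling a p m).
    have := H p hp; rewrite subr0 (bigD1 k0) //= hk0.
    set rest := \sum_(k | _) _ => hS.
    have hrest : idsum J (Q l) rest.
      apply: ideal_big_pred => // k hk.
      set kk := [ffun i => (k i : nat)].
      case: (classic (forall i, (kk i <= m i)%N)) => hle.
        apply: hJZ; apply: IH => //.
        have [i0 hi0] : exists i0, kk i0 != m i0.
          apply: NNPP => Hn; move/eqP: hk; apply; apply/ffunP => i; apply: ord_inj.
          have e_i : kk i = m i.
            by apply/eqP; apply: NNPP => h; apply: Hn; exists i; apply/negP.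
          by rewrite /kk ffunE in e_i; rewrite e_i /k0 ffunE.
        by apply: (sum_lt (i0 := i0)) => //; rewrite ltn_neqAle hi0 hle.
      have [i hi] : exists i, (m i < kk i)%N.
        by apply: NNPP => Hn; apply: hle => i; rewrite leqNgt; apply/negP => h; apply: Hn; exists i.
      apply: hQZ; apply: (idealM _ (hQi l)).
      rewrite /mfalling (bigD1 i) //=; apply: (idealMr _ (hQi l)).
      rewrite /falling (bigD1 (Ordinal hi)) //=; apply: (idealMr _ (hQi l)).
      have := ha i (m i) l => /(idsum_sub (hQi l) (fun _ h => h) (hKQ l)) h.
      exact: (idealBr (hQi l) h).
    have -> : b m * mfalling a p m = (b m * mfalling a p m + rest) - rest by rewrite addrK.
    by apply: (idealB HZ) => //; apply: hJZ.
  have cong : forall x : 'I_r -> D, Q l (mfalling a x m - \prod_(i < r) falling (al l i) (x i) (m i)).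
    move=> x; apply: prod_congr => // i; apply: prod_congr => // j.
    have := ha i j l => /(idsum_sub (hQi l) (fun _ h => h) (hKQ l)) h.
    have -> : x i - a i j - (x i - al l i j) = -(a i j - al l i j) by ring.
    exact: (idealN (hQi l) h).
  have lin : forall i : 'I_r, exists (d q : D), Q l q /\ falling (al l i) (c i) (m i) = falling (al l i) (p i) (m i) * d + q.
    move=> i; case: (posnP (m i)) => hm0.
      exists 1, 0; split; [exact: ideal0 | by rewrite /falling hm0 !big_ord0 mulr1 addr0].
    have hord := (hal l i).1.2 (m i) hm0 (c i) (hc i).
    apply: (factW (e := e l) hD (proj1 (hP l)) (proj2 (hP l)) hKi (hKQ l)).
    by apply: hord; split.
  have [d [q [hq eUV]]] := @prod_lin D (Q l) _ (index_enum 'I_r) _ _ (hQi l) lin.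
  have E : forall Fc Fp U V, U = V * d + q ->
      b m * Fc = b m * (Fc - U) + (b m * Fp) * d - b m * (Fp - V) * d + b m * q.
    by move=> Fc Fp U V ->; ring.
  rewrite (E _ (mfalling a p m) _ _ eUV).
  apply: (idealD HZ); last by apply: hQZ; apply: (idealM _ (hQi l)).
  apply: (idealB HZ); last by apply: hQZ; apply: (idealMr _ (hQi l)); apply: (idealM _ (hQi l)); exact: cong.
  apply: (idealD HZ); last by apply: (idealMr _ HZ).
  by apply: hQZ; apply: (idealM _ (hQi l)); exact: cong.
have main : forall M (m : {ffun 'I_r -> nat}), (\sum_i m i <= M)%N ->
    forall c, (forall i, imgR K (DI i) (c i)) -> J (b m * mfalling a c m).
  elim=> [|M IHM] m hm; apply: step => k hk.
    by move: (leq_trans hk hm); rewrite ltn0.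
  by apply: IHM; rewrite -ltnS; exact: leq_trans hk hm.
by move=> k c hc; rewrite subr0; exact: main _ k (leqnn _) c hc.
Qed.
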